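(* Let $A\in\mathbb{C}^{m\times m}$ be Hermitian positive semidefinite, let $B\in\mathbb{C}^{m\times k}$ be such that $B^*$ has full column rank (so $BB^*$ is positive definite), and let \[ H=\begin{bmatrix} A & B\\ B^* & 0\end{bmatrix}. \] Let $\alpha=\sup_{x\neq0}\dfrac{x^*Ax}{x^*\sqrt{BB^*}x}$ and $\beta_1=\min_{\|x\|=1}\|B^*x\|$. Then \[ \left(\frac{-2\beta_1}{\alpha+\sqrt{\alpha^2+4}},\ \beta_1\right)\setminus\{0\}\subseteq\rho(H). \]
   Context: $\rho(H)$ denotes the resolvent set of $H$ (the complement of its spectrum); $\sqrt{BB^*}$ is the positive definite square root. *)

(* Defs.v *)
From mathcomp Require Import all_boot all_order all_algebra.
From mathcomp Require Import complex reals.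
Set Implicit Arguments. Unset Strict Implicit. Unset Printing Implicit Defensive.
Import Order.TTheory GRing.Theory Num.Theory.
Local Open Scope ring_scope.

Definition ctmx (C : numClosedFieldType) m n (M : 'M[C]_(m, n)) : 'M[C]_(n, m) :=
  (map_mx (fun z => z^*) M)^T.

Definition qform (C : numClosedFieldType) n (M : 'M[C]_n) (x : 'cV[C]_n) : C :=
  (ctmx x *m M *m x) 0 0.

Definition hermitian (C : numClosedFieldType) n (M : 'M[C]_n) : Prop := ctmx M = M.

Definition psd (C : numClosedFieldType) n (M : 'M[C]_n) : Prop :=
  hermitian M /\ forall x : 'cV[C]_n, 0 <= qform M x.

Definition pd (C : numClosedFieldType) n (M : 'M[C]_n) : Prop :=
  hermitian M /\ forall x : 'cV[C]_n, x != 0 -> 0 < qform M x.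

Definition vnorm (R : realType) n (x : 'cV[R[i]]_n) : R :=
  Num.sqrt (complex.Re (qform 1%:M x)).

Definition resolvent (C : numClosedFieldType) n (H : 'M[C]_n) : pred C :=
  fun z => (H - z%:M) \in unitmx.

Definition saddle (C : numClosedFieldType) m k (A : 'M[C]_m) (B : 'M[C]_(m, k))
  : 'M[C]_(m + k) := block_mx A B (ctmx B) 0.

Definition is_sqrtm (C : numClosedFieldType) n (M S : 'M[C]_n) : Prop :=
  pd S /\ S *m S = M.

Definition is_sup_nonzero (R : realType) n (f : 'cV[R[i]]_n -> R) (a : R) : Prop :=
  (forall x, x != 0 -> f x <= a) /\
  (forall b, (forall x, x != 0 -> f x <= b) -> a <= b).

Definition is_min_unit (R : realType) n (g : 'cV[R[i]]_n -> R) (b : R) : Prop :=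
  (exists2 x, vnorm x = 1 & g x = b) /\ (forall x, vnorm x = 1 -> b <= g x).

(* Main.v *)
Require Import Defs.
From mathcomp Require Import all_boot all_order all_algebra.
From mathcomp Require Import complex reals ring lra.
Import Order.TTheory GRing.Theory Num.Theory.
Local Open Scope ring_scope.


Section CT.
Variable C : numClosedFieldType.

Lemma ctmxK n p (M : 'M[C]_(n, p)) : ctmx (ctmx M) = M.
Proof. by apply/matrixP => i j; rewrite !mxE conjCK. Qed.

Lemma ctmxM n p q (M : 'M[C]_(n, p)) (N : 'M[C]_(p, q)) :
  ctmx (M *m N) = ctmx N *m ctmx M.
Proof.
apply/matrixP => i j; rewrite !mxE rmorph_sum; apply: eq_bigr => l _.
by rewrite !mxE rmorphM mulrC.
Qed.

Lemma ctmxD n p (M N : 'M[C]_(n, p)) : ctmx (M + N) = ctmx M + ctmx N.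
Proof. by apply/matrixP => i j; rewrite !mxE rmorphD. Qed.

Lemma ctmxN n p (M : 'M[C]_(n, p)) : ctmx (- M) = - ctmx M.
Proof. by apply/matrixP => i j; rewrite !mxE rmorphN. Qed.

Lemma ctmxZ n p a (M : 'M[C]_(n, p)) : ctmx (a *: M) = a^* *: ctmx M.
Proof. by apply/matrixP => i j; rewrite !mxE rmorphM. Qed.

Lemma qform1E n (w : 'cV[C]_n) : qform 1%:M w = \sum_i `|w i 0| ^+ 2.
Proof.
rewrite /qform mulmx1 mxE; apply: eq_bigr => i _.
by rewrite !mxE normCK mulrC.
Qed.

Lemma qform1_ge0 n (w : 'cV[C]_n) : 0 <= qform 1%:M w.
Proof. by rewrite qform1E sumr_ge0 // => i _; rewrite exprn_ge0. Qed.

Lemma qform1_gt0 n (w : 'cV[C]_n) : w != 0 -> 0 < qform 1%:M w.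
Proof.
move=> wn0; rewrite lt_neqAle qform1_ge0 andbT eq_sym.
apply/negP => /eqP; rewrite qform1E => h; move/negP: wn0; apply; apply/eqP/matrixP => i j.
have := @psumr_eq0P _ _ xpredT (fun i => `|w i 0| ^+ 2) (fun i _ => exprn_ge0 2 (normr_ge0 (w i 0))) h i isT.
by move/eqP; rewrite ord1 !mxE expf_eq0 /= normr_eq0 => /eqP.
Qed.

Lemma qformZ n (M : 'M[C]_n) a (w : 'cV[C]_n) :
  qform M (a *: w) = a^* * a * qform M w.
Proof.
by rewrite /qform ctmxZ -!scalemxAl -scalemxAr !mxE mulrA.
Qed.

Lemma ctmx0 n p : ctmx (0 : 'M[C]_(n, p)) = 0.
Proof. by apply/matrixP => i j; rewrite !mxE rmorph0. Qed.
End CT.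


Section RR.
Variable R : realType.
Local Notation C := (R[i]).

Lemma e00D (M N : 'M[C]_1) : (M + N) 0 0 = M 0 0 + N 0 0.
Proof. by rewrite mxE. Qed.
Lemma e00N (M : 'M[C]_1) : (- M) 0 0 = - M 0 0.
Proof. by rewrite mxE. Qed.
Lemma e00Z a (M : 'M[C]_1) : (a *: M) 0 0 = a * M 0 0.
Proof. by rewrite mxE. Qed.

Lemma ReM_real (x : R) (w : C) : complex.Re ((x%:C)%C * w) = x * complex.Re w.
Proof. by case: w => a b /=; rewrite mul0r subr0. Qed.

Lemma ReMM (x y : R) (w : C) :
  complex.Re ((x%:C)%C * (y%:C)%C * w) = x * y * complex.Re w.
Proof. by case: w => a b /=; ring. Qed.

Lemma sqrt_inv_sq (n b : R) : 0 < n -> 0 <= b ->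
  Num.sqrt (n^-1 / n * b) = n^-1 * Num.sqrt b.
Proof.
move=> np b0; have -> : n^-1 / n = n^-1 ^+ 2 by rewrite expr2.
by rewrite sqrtrM ?exprn_ge0 ?invr_ge0 ?ltW // sqrtr_sqr ger0_norm // invr_ge0 ltW.
Qed.

Lemma ReD (u w : C) : complex.Re (u + w) = complex.Re u + complex.Re w.
Proof. by case: u; case: w. Qed.

Lemma ReN (w : C) : complex.Re (- w) = - complex.Re w.
Proof. by case: w. Qed.

Lemma ge0_Re (w : C) : 0 <= w -> 0 <= complex.Re w.
Proof. by rewrite lecE => /andP[]. Qed.

Lemma gt0_Re (w : C) : 0 < w -> 0 < complex.Re w.
Proof. by rewrite ltcE => /andP[]. Qed.

Lemma conj_realC (x : R) : Num.conj ((x%:C)%C : C) = (x%:C)%C.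
Proof. by apply: conj_Creal; rewrite complex_real. Qed.

Lemma qform_CS n (S : 'M[C]_n) (z : 'cV[C]_n) (l : R) : Defs.hermitian S ->
  complex.Re (qform 1%:M ((l%:C)%C *: z - S *m z)) =
  l ^+ 2 * complex.Re (qform 1%:M z) - 2 * l * complex.Re (qform S z)
  + complex.Re (qform 1%:M (S *m z)).
Proof.
move=> hS; rewrite /qform !mulmx1 ctmxD ctmxN ctmxZ ctmxM hS conj_realC.
rewrite mulmxDl mulmxDr mulmxBr mulNmx -!scalemxAl -!scalemxAr !mulmxA.
rewrite !mulmxN !mulNmx !mulmxA opprK.
move: (ctmx z *m z) (ctmx z *m S *m z) (ctmx z *m S *m S *m z) => P Q T.
rewrite !e00D !e00N !e00Z !ReD !ReN !ReM_real !e00N !ReN.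
move: (complex.Re (P 0 0)) (complex.Re (Q 0 0)) (complex.Re (T 0 0)) => p q r.
ring.
Qed.
End RR.


Lemma key_ineq (R : realType) (t alpha beta1 a2 qa c b2 : R) :
  0 < a2 -> 0 <= qa -> 0 < c -> 0 <= b2 -> 0 <= alpha ->
  t * qa + b2 = t * t * a2 ->
  (forall l : R, 0 <= l ^+ 2 * a2 - 2 * l * c + b2) ->
  qa <= alpha * c ->
  beta1 * Num.sqrt a2 <= Num.sqrt b2 ->
  (-2 * beta1) / (alpha + Num.sqrt (alpha ^+ 2 + 4)) < t < beta1 -> t != 0 ->
  False.
Proof.
move=> a2p qa0 cp b20 al0 E CS Ha Hb /andP[Hlo Hhi] tn0.
set na := Num.sqrt a2; set nb := Num.sqrt b2.
have naP : 0 < na by rewrite sqrtr_gt0.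
have nb0 : 0 <= nb by rewrite sqrtr_ge0.
have ea : a2 = na ^+ 2 by rewrite sqr_sqrtr // ltW.
have eb : b2 = nb ^+ 2 by rewrite sqr_sqrtr.
rewrite ea eb in E CS Ha *.
have [tp|tn] := ltrP 0 t.
  have b1p : 0 < beta1 by apply: lt_trans Hhi.
  have h1 : beta1 ^+ 2 * na ^+ 2 <= nb ^+ 2.
    have bn0 : 0 <= beta1 * na by rewrite mulr_ge0 // ltW.
    rewrite -exprMn !expr2; apply: ler_pM => //.
  have h2 : t * t * na ^+ 2 < beta1 ^+ 2 * na ^+ 2.
    have h0 : t * t < beta1 ^+ 2 by rewrite expr2; apply: ltr_pM => //; exact: ltW.
    by rewrite ltr_pM2r // exprn_gt0.
  have : 0 <= t * qa by rewrite mulr_ge0 // ltW.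
  lra.
have tneg : t < 0 by rewrite lt_neqAle tn0 tn.
set q := Num.sqrt (alpha ^+ 2 + 4).
have qp : 0 < q by rewrite sqrtr_gt0; nra.
have eq2 : q ^+ 2 = alpha ^+ 2 + 4 by rewrite sqr_sqrtr //; nra.
set D := alpha + q.
have Dp : 0 < D by rewrite /D; lra.
have HD : - t * D < 2 * beta1.
  move: Hlo; rewrite -/q -/D ltr_pdivrMr // !mulNr; lra.
set s := - t.
have sp : 0 < s by rewrite /s; lra.
have hc : c ^+ 2 <= na ^+ 2 * nb ^+ 2.
  have := CS (c / na ^+ 2).
  have na2 : na != 0 by rewrite gt_eqF.
  have -> : (c / na ^+ 2) ^+ 2 * na ^+ 2 - 2 * (c / na ^+ 2) * c + nb ^+ 2
    = nb ^+ 2 - c ^+ 2 / na ^+ 2 by field.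
  rewrite subr_ge0 ler_pdivrMr ?exprn_gt0 //; lra.
have hc2 : c <= na * nb.
  have p0 : 0 <= na * nb by rewrite mulr_ge0 // ltW.
  rewrite -exprMn !expr2 in hc; nra.
have hb2 : nb ^+ 2 <= s ^+ 2 * na ^+ 2 + s * alpha * (na * nb).
  have : nb ^+ 2 = s ^+ 2 * na ^+ 2 + s * qa by rewrite /s; lra.
  move=> ->; rewrite lerD2l -mulrA ler_pM2l //.
  by apply: (le_trans Ha); apply: ler_wpM2l.
have X1 : 0 < 2 * nb - s * D * na.
  have : 2 * beta1 * na <= 2 * nb by rewrite -mulrA ler_pM2l.
  have : s * D * na < 2 * beta1 * na by rewrite ltr_pM2r.
  lra.
have X2 : 0 < 2 * nb + s * D * na - 2 * s * alpha * na.
  have : 0 < s * na * q by rewrite !mulr_gt0.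
  have e1 : s * D * na = s * alpha * na + s * na * q by rewrite /D; ring.
  have e2 : 2 * s * alpha * na = 2 * (s * alpha * na) by ring.
  lra.
have iden : 4 * (nb ^+ 2 - s * alpha * (na * nb) - s ^+ 2 * na ^+ 2) =
   (2 * nb - s * D * na) * (2 * nb + s * D * na - 2 * s * alpha * na)
   + s ^+ 2 * na ^+ 2 * (q ^+ 2 - alpha ^+ 2 - 4).
  by rewrite /D; ring.
have Y := mulr_gt0 X1 X2.
have Z : s ^+ 2 * na ^+ 2 * (q ^+ 2 - alpha ^+ 2 - 4) = 0.
  by rewrite eq2; ring.
lra.
Qed.

Theorem mainTheorem10 (R : realType) (m k : nat)
    (A : 'M[R[i]]_m) (B : 'M[R[i]]_(m, k)) (S : 'M[R[i]]_m) (alpha beta1 : R) :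
  psd A ->
  \rank (ctmx B) = m ->
  is_sqrtm (B *m ctmx B) S ->
  is_sup_nonzero (fun x => complex.Re (qform A x) / complex.Re (qform S x)) alpha ->
  is_min_unit (fun x => vnorm (ctmx B *m x)) beta1 ->
  forall t : R,
    (-2 * beta1) / (alpha + Num.sqrt (alpha ^+ 2 + 4)) < t < beta1 -> t != 0 ->
    (t%:C)%C \in resolvent (saddle A B).
Proof.
move=> [_ hApsd] _ [[hS hSpd] hSS] [hsup _] [_ hmin] t Ht tn0.
rewrite unfold_in /resolvent unitmxE unitfE; apply/negP => /det0P [v vn0 hv].
rewrite -(hsubmxK v) in vn0 hv.
move: (lsubmx v) (rsubmx v) vn0 hv => x y vn0 hv.
rewrite -[x]ctmxK in vn0 hv; move: (ctmx x) vn0 hv => z vn0 hv.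
rewrite mulmxBr mul_mx_scalar /saddle mul_row_block scale_row_mx opp_row_mx add_row_mx -row_mx0 in hv.
case/eq_row_mx: hv => e1 e2.
rewrite mulmx0 addr0 in e2; move/eqP: e2; rewrite subr_eq0 => /eqP e2.
move/eqP: e1; rewrite subr_eq0 => /eqP e1.
have tC0 : (t%:C)%C != 0 :> R[i] by rewrite fmorph_eq0.
have zn0 : z != 0.
  apply/negP => /eqP z0; move/negP: vn0; apply.
  have y0 : y = 0.
    move: e2; rewrite z0 ctmx0 mul0mx => /esym/eqP.
    by rewrite scaler_eq0 (negbTE tC0) /= => /eqP.
  by rewrite z0 y0 ctmx0 row_mx0.
have M1 : ctmx z *m A *m z + y *m ctmx B *m z = (t%:C)%C *: (ctmx z *m z).
  by rewrite -mulmxDl e1 -scalemxAl.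
have M2 : ctmx z *m B *m (ctmx B *m z) = (t%:C)%C *: (y *m ctmx B *m z).
  by rewrite mulmxA e2 -!scalemxAl.
have E : (t%:C)%C * qform A z + qform 1%:M (ctmx B *m z)
    = (t%:C)%C * (t%:C)%C * qform 1%:M z.
  rewrite /qform !mulmx1 ctmxM ctmxK M2 e00Z -mulrDr -e00D M1 e00Z mulrA.
  by [].
have ES : qform 1%:M (ctmx B *m z) = qform 1%:M (S *m z).
  rewrite /qform !mulmx1 !ctmxM ctmxK hS !mulmxA -(mulmxA (ctmx z) S S) hSS.
  by rewrite !mulmxA.
have a2p : 0 < complex.Re (qform 1%:M z) by apply: gt0_Re; apply: qform1_gt0.
have qa0 : 0 <= complex.Re (qform A z) by apply: ge0_Re.
have cp : 0 < complex.Re (qform S z) by apply: gt0_Re; apply: hSpd.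
have b20 : 0 <= complex.Re (qform 1%:M (ctmx B *m z)) by apply: ge0_Re; apply: qform1_ge0.
have Hsz := hsup z zn0.
have al0 : 0 <= alpha := le_trans (divr_ge0 qa0 (ltW cp)) Hsz.
have ER : t * complex.Re (qform A z) + complex.Re (qform 1%:M (ctmx B *m z))
    = t * t * complex.Re (qform 1%:M z).
  by have := congr1 (@complex.Re R) E; rewrite ReD ReM_real ReMM.
have CS : forall l : R, 0 <= l ^+ 2 * complex.Re (qform 1%:M z)
    - 2 * l * complex.Re (qform S z) + complex.Re (qform 1%:M (ctmx B *m z)).
  move=> l; rewrite ES -qform_CS //; apply: ge0_Re; apply: qform1_ge0.
have Ha : complex.Re (qform A z) <= alpha * complex.Re (qform S z).
  by rewrite -ler_pdivrMr.
have Hb : beta1 * Num.sqrt (complex.Re (qform 1%:M z))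
    <= Num.sqrt (complex.Re (qform 1%:M (ctmx B *m z))).
  set n := Num.sqrt (complex.Re (qform 1%:M z)).
  have np : 0 < n by rewrite sqrtr_gt0.
  have nn0 : n != 0 by rewrite gt_eqF.
  have en : complex.Re (qform 1%:M z) = n ^+ 2 by rewrite sqr_sqrtr // ltW.
  have h := hmin (((n^-1)%:C)%C *: z).
  rewrite /vnorm -scalemxAr !qformZ conj_realC -rmorphM !ReM_real en in h.
  have e1' : n^-1 * n^-1 * n ^+ 2 = 1 by field.
  rewrite e1' sqrtr1 sqrt_inv_sq // in h.
  have h' := h erefl.
  have := ler_wpM2r (ltW np) h'; rewrite mulrAC mulVf // mul1r.
  by rewrite /vnorm.
exact: (key_ineq _ _ _ _ _ _ _ _ a2p qa0 cp b20 al0 ER CS Ha Hb Ht tn0).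
Qed.
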